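(* For every positive integer $m$, the Bayesian Price of Anarchy of the proportional allocation mechanism over instances with $m$ resources in which all valuation functions are concave is at least $\frac{\sqrt{m}}{2}$. That is, there exist an instance with $m$ resources and concave valuations (in every realization) and a Bayesian Nash equilibrium $\mathbf{B}$ of it such that $\mathbb{E}_{\mathbf{v}}[\mathrm{SW}(\mathbf{o}^{\mathbf{v}})] \ge \frac{\sqrt{m}}{2}\, \mathbb{E}_{\mathbf{v},\mathbf{b}\sim \mathbf{B}(\mathbf{v})}[\mathrm{SW}(\mathbf{b})]$.
   Context: There are $n$ agents and $m$ divisible resources, each of unit supply. Each agent $i$ has a valuation $v_i:[0,1]^m\to\mathbb{R}_{\ge 0}$ with $v_i(\mathbf{0})=0$ that is monotone non-decreasing (componentwise). A valuation is concave if it is a concave function on $[0,1]^m$. Proportional allocation mechanism: each agent $i$ submits a bid $b_{ij}\ge 0$ for every resource $j$; agent $i$ receives the fraction $x_{ij}(\mathbf{b})=b_{ij}/\sum_{k=1}^n b_{kj}$ of resource $j$ (if all bids on $j$ are $0$, the allocation of $j$ is defined arbitrarily but consistently) and pays $q_i(\mathbf{b})=\sum_{j}b_{ij}$. The utility is $u_i(\mathbf{b})=v_i(x_i(\mathbf{b}))-q_i(\mathbf{b})$, where $x_i=(x_{ij})_j$. The social welfare of an allocation is $\mathrm{SW}(\mathbf{x})=\sum_i v_i(x_i)$ and $\mathrm{SW}(\mathbf{b})=\mathrm{SW}(\mathbf{x}(\mathbf{b}))$; $\mathbf{o}^{\mathbf{v}}$ denotes a welfare-maximizing allocation (with $x_{ij}\ge0$,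 $\sum_i x_{ij}\le 1$) for valuation profile $\mathbf{v}$. Bayesian setting: each $v_i$ is drawn independently from a publicly known distribution $D_i$ over a set $V_i$ of valuations. A Bayesian Nash equilibrium is a profile $\mathbf{B}(\mathbf{v})=\times_i B_i(v_i)$, where $B_i(v_i)$ is a distribution over bid vectors of agent $i$, such that for every agent $i$, every $v_i$ and every bid vector $b_i'$, $\mathbb{E}_{\mathbf{v}_{-i},\mathbf{b}}[u_i(\mathbf{b})]\ge \mathbb{E}_{\mathbf{v}_{-i},\mathbf{b}}[u_i(b_i',\mathbf{b}_{-i})]$ (utilities evaluated with agent $i$'s valuation $v_i$). The Bayesian Price of Anarchy over a class of instances is the supremum, over instances in the class and Bayesian Nash equilibria $\mathbf{B}$, of $\mathbb{E}_{\mathbf{v}}[\mathrm{SW}(\mathbf{o}^{\mathbf{v}})]/\mathbb{E}_{\mathbf{v},\mathbf{b}\sim\mathbf{B}}[\mathrm{SW}(\mathbf{b})]$. *)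

(* Defs.v *)
From mathcomp Require Import all_boot all_order all_algebra.
From mathcomp Require Import reals.
Set Implicit Arguments. Unset Strict Implicit. Unset Printing Implicit Defensive.
Import Order.TTheory GRing.Theory Num.Theory.
Local Open Scope ring_scope.

Section PropAlloc.
Variable R : realType.
Variables (n m K L : nat).
(* agents: 'I_n, resources: 'I_m,
   types of each agent: 'I_K (finite-support prior D_i),
   pure bids in the support of a mixed strategy: 'I_L *)

Definition in_cube (x : 'I_m -> R) : Prop := forall j, 0 <= x j <= 1.

Definition valuation (v : ('I_m -> R) -> R) : Prop :=
  v (fun _ => 0) = 0 /\
  (forall x, in_cube x -> 0 <= v x) /\
  (forall x y, in_cube x -> in_cube y -> (forall j, x j <= y j) -> v x <= v y).

Definition concave_valuation (v : ('I_m -> R) -> R) : Prop :=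
  forall x y (t : R), in_cube x -> in_cube y -> 0 <= t <= 1 ->
    t * v x + (1 - t) * v y <= v (fun j => t * x j + (1 - t) * y j).

Definition alloc (b : 'I_n -> 'I_m -> R) (i : 'I_n) : 'I_m -> R :=
  fun j => let tot := \sum_(k < n) b k j in if tot == 0 then 0 else b i j / tot.

Definition payment (b : 'I_n -> 'I_m -> R) (i : 'I_n) : R := \sum_(j < m) b i j.

(* prior: agent i has type k with probability p i k and valuation val i k *)
Variable p : 'I_n -> 'I_K -> R.
Variable val : 'I_n -> 'I_K -> ('I_m -> R) -> R.
(* strategy: agent i of type k plays bid vector bid i k l with probability q i k l *)
Variable q : 'I_n -> 'I_K -> 'I_L -> R.
Variable bid : 'I_n -> 'I_K -> 'I_L -> 'I_m -> R.

Definition bayesian_instance : Prop :=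
  (forall i k, 0 <= p i k) /\ (forall i, \sum_(k < K) p i k = 1) /\
  (forall i k, valuation (val i k)).

Definition all_concave : Prop := forall i k, concave_valuation (val i k).

Definition mixed_strategies : Prop :=
  (forall i k l, 0 <= q i k l) /\ (forall i k, \sum_(l < L) q i k l = 1) /\
  (forall i k l j, 0 <= bid i k l j).

Definition bids (t : {ffun 'I_n -> 'I_K}) (s : {ffun 'I_n -> 'I_L}) : 'I_n -> 'I_m -> R :=
  fun i => bid i (t i) (s i).

Definition prob_v (t : {ffun 'I_n -> 'I_K}) : R := \prod_(i < n) p i (t i).
Definition prob_b (t : {ffun 'I_n -> 'I_K}) (s : {ffun 'I_n -> 'I_L}) : R :=
  \prod_(i < n) q i (t i) (s i).

Definition SW (t : {ffun 'I_n -> 'I_K}) (x : 'I_n -> 'I_m -> R) : R :=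
  \sum_(i < n) val i (t i) (x i).

Definition expected_SW : R :=
  \sum_(t : {ffun 'I_n -> 'I_K}) prob_v t *
    \sum_(s : {ffun 'I_n -> 'I_L}) prob_b t s * SW t (alloc (bids t s)).

(* E_{v_{-i}, b}[u_i(b'')] for agent i of type k, where b'' is the bid profile
   b with agent i's bid possibly replaced by dev (None = no replacement) *)
Definition expected_utility (i : 'I_n) (k : 'I_K) (dev : option ('I_m -> R)) : R :=
  \sum_(t : {ffun 'I_n -> 'I_K} | t i == k) (\prod_(j < n | j != i) p j (t j)) *
    \sum_(s : {ffun 'I_n -> 'I_L}) prob_b t s *
      (let b := fun j => if j == i then (if dev is Some b' then b' else bids t s j)
                         else bids t s j in
       val i k (alloc b i) - payment b i).

Definition bayes_nash_eq : Prop :=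
  forall (i : 'I_n) (k : 'I_K) (b' : 'I_m -> R), (forall j, 0 <= b' j) ->
    expected_utility i k (Some b') <= expected_utility i k None.

(* an allocation for every valuation profile (indexed by the type profile) *)
Definition feasible_allocations (o : {ffun 'I_n -> 'I_K} -> 'I_n -> 'I_m -> R) : Prop :=
  forall t, (forall i j, 0 <= o t i j) /\ (forall j, \sum_(i < n) o t i j <= 1).

Definition expected_SW_alloc (o : {ffun 'I_n -> 'I_K} -> 'I_n -> 'I_m -> R) : R :=
  \sum_(t : {ffun 'I_n -> 'I_K}) prob_v t * SW t (o t).

End PropAlloc.

(* Main.v *)
Require Import Defs.
From mathcomp Require Import all_boot all_order all_algebra.
From mathcomp Require Import reals.
From mathcomp Require Import ring lra.
From Stdlib Require Import FunctionalExtensionality.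
Import Order.TTheory GRing.Theory Num.Theory.
Local Open Scope ring_scope.

Lemma I1 (R : realType) (r b u : R) : 0 < r -> 0 <= b -> u = ((1+r)*(1+r))^-1 ->
  b/(u+b) - b <= (r*u)/(u + r*u) - r*u.
Proof.
move=> r0 b0 hu.
have a0 : 1 + r != 0 by rewrite lt0r_neq0 //; lra.
have u0 : 0 < u by rewrite hu invr_gt0 mulr_gt0 //; lra.
have ru0 : 0 < r * u by rewrite mulr_gt0.
have X0 : 0 <= b * ((1+r)*(1+r)) by rewrite mulr_ge0 // mulr_ge0 //; lra.
rewrite -subr_ge0.
have -> : r * u / (u + r * u) - r * u - (b / (u + b) - b) = (b - r*u)^+2 / (u+b).
  rewrite hu; field. rewrite a0 /=; apply: lt0r_neq0; lra.
rewrite divr_ge0 // ?sqr_ge0 //; lra.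
Qed.

Lemma I2 (R : realType) (r b u : R) : 0 < r -> 0 <= b -> u = ((1+r)*(1+r))^-1 ->
  r*(b/(b + r*u)) <= r*u + r^+2 * b.
Proof.
move=> r0 b0 hu.
have a0 : 1 + r != 0 by rewrite lt0r_neq0 //; lra.
have u0 : 0 < u by rewrite hu invr_gt0 mulr_gt0 //; lra.
have ru0 : 0 < r * u by rewrite mulr_gt0.
have X0 : 0 <= b * ((1+r)*(1+r)) by rewrite mulr_ge0 // mulr_ge0 //; lra.
rewrite -subr_ge0.
have -> : r*u + r^+2 * b - r*(b/(b + r*u)) = r^+2 * (b - u)^+2 / (b + r*u).
  rewrite hu; field. rewrite a0 /=; apply: lt0r_neq0; lra.
apply: divr_ge0; [apply: mulr_ge0; apply: sqr_ge0 | lra].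
Qed.
Lemma sum2 (R : realType) (F : 'I_2 -> R) : \sum_(i < 2) F i = F ord0 + F ord_max.
Proof. by rewrite !big_ord_recl big_ord0 addr0; congr (_ + F _); apply/val_inj. Qed.
Lemma prod2 (R : realType) (F : 'I_2 -> R) : \prod_(i < 2) F i = F ord0 * F ord_max.
Proof. by rewrite !big_ord_recl big_ord0 mulr1; congr (_ * F _); apply/val_inj. Qed.
Lemma I2cases (i : 'I_2) : i = ord0 \/ i = ord_max.
Proof. case: i => [[|[|k]] h]; [left|right|by []]; exact/val_inj. Qed.
Lemma sum_s1 (R : realType) (X : R) : \sum_(s : {ffun 'I_2 -> 'I_1}) X = X.
Proof. by rewrite sumr_const card_ffun !card_ord. Qed.
Lemma sum_t (R : realType) m (X : R) : \sum_(s : {ffun 'I_2 -> 'I_m}) X = X *+ (m * m).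
Proof. by rewrite sumr_const card_ffun !card_ord expnS expn1. Qed.
Lemma sum_filt (R : realType) m (k : 'I_m) (G : 'I_m -> R) :
  \sum_(t : {ffun 'I_2 -> 'I_m} | t ord0 == k) G (t ord_max) = \sum_j G j.
Proof.
rewrite big_mkcond /=.
pose F (z : 'I_2) (j : 'I_m) := if z == ord0 then (j == k)%:R else G j.
transitivity (\sum_(t : {ffun 'I_2 -> 'I_m}) \prod_(z < 2) F z (t z)).
  apply: eq_bigr => t _; rewrite prod2 /F /=.
  by case: eqP => _; rewrite ?mul1r ?mul0r.
rewrite -bigA_distr_bigA prod2 /F /=.
rewrite (bigD1 k) //= eqxx big1 ?addr0 ?mul1r // => j /negPf -> //.
Qed.

Lemma sum_s_le (R : realType) (F : {ffun 'I_2 -> 'I_1} -> R) X :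
  (forall s, F s <= X) -> \sum_s F s <= X.
Proof. by move=> h; rewrite -(@sum_s1 R X); apply: ler_sum => s _. Qed.
Lemma sum_s_eq (R : realType) (F : {ffun 'I_2 -> 'I_1} -> R) X :
  (forall s, F s = X) -> \sum_s F s = X.
Proof. by move=> h; rewrite -(@sum_s1 R X); apply: eq_bigr => s _. Qed.

Theorem theorem1 (R : realType) (m : nat) (hm : (0 < m)%N) :
  exists (n K L : nat)
         (p : 'I_n -> 'I_K -> R) (val : 'I_n -> 'I_K -> ('I_m -> R) -> R)
         (q : 'I_n -> 'I_K -> 'I_L -> R) (bid : 'I_n -> 'I_K -> 'I_L -> 'I_m -> R)
         (o : {ffun 'I_n -> 'I_K} -> 'I_n -> 'I_m -> R),
    [/\ bayesian_instance p val, all_concave val,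
        mixed_strategies q bid, bayes_nash_eq p val q bid
      & [/\ feasible_allocations o,
            0 < expected_SW p val q bid
          & Num.sqrt (m%:R) / 2 * expected_SW p val q bid
              <= expected_SW_alloc p val o]].
Proof.
set r : R := Num.sqrt m%:R.
have r0 : 0 < r by rewrite sqrtr_gt0 ltr0n.
have r2 : r^+2 = m%:R by rewrite sqr_sqrtr // ler0n.
pose u : R := ((1+r)*(1+r))^-1.
have hu : u = ((1+r)*(1+r))^-1 by [].
have a0 : 1 + r != 0 by rewrite lt0r_neq0 //; lra.
have u0 : 0 < u by rewrite hu invr_gt0 mulr_gt0 //; lra.
have ru0 : 0 < r * u by rewrite mulr_gt0.
have m0 : m%:R != 0 :> R by rewrite pnatr_eq0 -lt0n.
pose x0 : 'I_m := Ordinal hm.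
pose vv := fun (i : 'I_2) (k : 'I_m) (y : 'I_m -> R) =>
  if i == ord0 then r * \big[Order.min/1]_(j < m) y j else y k.
pose bb := fun (i : 'I_2) (k : 'I_m) (l : 'I_1) (j : 'I_m) =>
  if i == ord0 then u else if j == k then r * u else 0.
have minge0 : forall y : 'I_m -> R, (forall j, 0 <= y j) -> 0 <= \big[Order.min/1]_(j < m) y j.
  by move=> y hy; apply: le_bigmin => //; rewrite ler01.
have minle : forall (y : 'I_m -> R) j, \big[Order.min/1]_(j < m) y j <= y j.
  by move=> y j; apply: bigmin_le.
have minle1 : forall (y : 'I_m -> R), \big[Order.min/1]_(j < m) y j <= 1.
  by move=> y; apply: bigmin_le_id.
have uru0 : u + r * u != 0 by rewrite lt0r_neq0 //; lra.
have un0 : u != 0 by rewrite lt0r_neq0.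
have allocE0 : forall t s j, alloc (bids bb t s) ord0 j = if j == t ord_max then (1+r)^-1 else 1.
  move=> t s j; rewrite /alloc sum2 /bids /bb /=.
  case: (j == t ord_max).
    by rewrite (negbTE uru0) hu; field.
  by rewrite addr0 (negbTE un0) divff.
have allocE1 : forall t s j, alloc (bids bb t s) ord_max j = if j == t ord_max then r / (1+r) else 0.
  move=> t s j; rewrite /alloc sum2 /bids /bb /=.
  case: (j == t ord_max).
    by rewrite (negbTE uru0) hu; field.
  by rewrite addr0 (negbTE un0) mul0r.
have hr : 0 <= r by exact: ltW.
have h01 : (ord0 == ord_max :> 'I_2) = false by [].
have h10 : (ord_max == ord0 :> 'I_2) = false by [].
have xle1 : (1+r)^-1 <= 1 by rewrite invf_le1; lra.
have minx : forall k : 'I_m,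
    \big[Order.min/1]_(j < m) (if j == k then (1+r)^-1 else 1) = (1+r)^-1.
  move=> k; apply/le_anti; apply/andP; split.
    by have := minle (fun j => if j == k then (1+r)^-1 else 1) k; rewrite eqxx.
  by apply: le_bigmin => // j _; case: (j == k).
have SWE : forall t s, SW vv t (alloc (bids bb t s)) = 2 * r / (1 + r).
  move=> t s; rewrite /SW sum2 /vv eqxx h10.
  under eq_bigr do rewrite allocE0.
  rewrite minx allocE1 eqxx; by field.
have ESW : expected_SW (fun _ _ => m%:R^-1) vv (fun _ _ _ => 1) bb = 2 * r / (1 + r).
  rewrite /expected_SW.
  under eq_bigr => t _.
    rewrite /prob_v prod2.
    under eq_bigr => s _ do rewrite /prob_b prod2 SWE !mul1r.
    rewrite sum_s1.
  over.
  rewrite sum_t.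
  have -> : forall y : R, y *+ (m * m)%N = y * (m%:R * m%:R) by move=> y; rewrite -natrM mulr_natr.
  by field; rewrite a0 m0.
have ESWA : expected_SW_alloc (fun _ _ => m%:R^-1) vv
    (fun _ (i : 'I_2) (_ : 'I_m) => if i == ord0 then (1 : R) else 0) = r.
  rewrite /expected_SW_alloc.
  under eq_bigr => t _.
    rewrite /prob_v prod2 /SW sum2 /vv eqxx h10 /=.
    rewrite bigmin_eq_id //.
  over.
  rewrite sum_t.
  have -> : forall y : R, y *+ (m * m)%N = y * (m%:R * m%:R) by move=> y; rewrite -natrM mulr_natr.
  by field; rewrite m0.
have probb1 : forall (t : {ffun 'I_2 -> 'I_m}) (s : {ffun 'I_2 -> 'I_1}), prob_b (fun _ _ _ => (1:R)) t s = 1.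
  by move=> t s; rewrite /prob_b prod2 mulr1.
have BNE : bayes_nash_eq (fun _ _ => m%:R^-1) vv (fun _ _ _ => 1) bb.
  move=> i k b' hb'; rewrite /expected_utility.
  case: (I2cases i) => ->.
  -
    apply: (@le_trans _ _ (r * u)).
      apply: (@le_trans _ _ (\sum_(t : {ffun 'I_2 -> 'I_m} | t ord0 == k)
          m%:R^-1 * (r*u + m%:R * b' (t ord_max) - \sum_j b' j))).
        apply: ler_sum => t _.
        rewrite big_mkcond prod2 /= mul1r.
        apply: ler_wpM2l; first by rewrite invr_ge0 ler0n.
        apply: sum_s_le => s; rewrite probb1 mul1r.
        set b1 := b' (t ord_max).
        have hb1 : 0 <= b1 := hb' _.
        have aE : alloc (fun j : 'I_2 => if j == ord0 then b' else bids bb t s j) ord0 (t ord_max)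
            = b1 / (b1 + r * u).
          rewrite /alloc sum2 /= /bids /bb h10 eqxx ifF //.
          by apply/negbTE; rewrite lt0r_neq0 // -/b1; lra.
        rewrite /vv /payment /= lerD2r.

        rewrite -r2; apply: le_trans (@I2 R r b1 u r0 hb1 hu).
        apply: (ler_wpM2l hr); rewrite -aE; exact: minle.
      rewrite (@sum_filt R m k (fun j => m%:R^-1 * (r*u + m%:R * b' j - \sum_j b' j))).
      rewrite -mulr_sumr sumrB big_split /= !sumr_const card_ord -mulr_sumr.
      rewrite -[(r*u) *+ m]mulr_natr -[(\sum_j b' j) *+ m]mulr_natr.
      rewrite le_eqVlt; apply/orP; left; apply/eqP; by field.
    rewrite (_ : \sum_(t : {ffun 'I_2 -> 'I_m} | t ord0 == k) _ = \sum_(t : {ffun 'I_2 -> 'I_m} | t ord0 == k) m%:R^-1 * (r*u)); last first.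
      apply: eq_bigr => t _; rewrite big_mkcond prod2 /= mul1r; congr (_ * _).
      apply: sum_s_eq => s; rewrite probb1 mul1r.
      have -> : (fun j : 'I_2 => if j == ord0 then bids bb t s j else bids bb t s j) = bids bb t s.
        by apply: functional_extensionality => j; rewrite if_same.
      rewrite /vv eqxx; under eq_bigr do rewrite allocE0.
      rewrite minx /payment /bids /bb eqxx sumr_const card_ord.
      rewrite -(mulr_natr u) -r2 hu; by field.
    rewrite (@sum_filt R m k (fun _ => m%:R^-1 * (r*u))) sumr_const card_ord -(mulr_natr (m%:R^-1 * (r*u))).
    rewrite le_eqVlt; apply/orP; left; apply/eqP; by field.
  -
    apply: ler_sum => t /eqP tk.
    apply: ler_wpM2l; first by apply: prodr_ge0 => j _; rewrite invr_ge0 ler0n.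
    apply: ler_sum => s _; rewrite probb1 !mul1r /=.
    have hb := hb' k.
    have ubk : u + b' k != 0 by rewrite lt0r_neq0 //; lra.
    have -> : (fun j : 'I_2 => if j == ord_max then bids bb t s j else bids bb t s j) = bids bb t s.
      by apply: functional_extensionality => j; rewrite if_same.
    rewrite /vv h10 allocE1 tk eqxx /alloc sum2 eqxx h01 /bids /bb (negbTE ubk).
    rewrite /payment /= tk.
    have -> : \sum_(j < m) (if j == k then r * u else 0) = r * u.
      by rewrite (bigD1 k) //= eqxx big1 ?addr0 // => j /negPf ->.
    have Sge : b' k <= \sum_j b' j.
      by rewrite (bigD1 k) //= lerDl sumr_ge0.
    have := @I1 R _ _ _ r0 hb hu.
    have -> : r*u/(u+r*u) = r/(1+r) by rewrite hu; field.
    lra.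
exists 2%N, m, 1%N, (fun _ _ => m%:R^-1), vv, (fun _ _ _ => 1), bb,
  (fun _ (i : 'I_2) (_ : 'I_m) => if i == ord0 then (1 : R) else 0).
split => //.
- split; first by move=> i k; rewrite invr_ge0 ler0n.
  split.
    move=> i; rewrite sumr_const card_ord -(mulr_natr (m%:R^-1)) mulVf //.
  move=> i k; case: (I2cases i) => ->; rewrite /vv ?eqxx ?h10; split.
  + have -> : \big[Order.min/1]_(j < m) (0:R) = 0.
      by apply/le_anti; rewrite minge0 // andbT (minle (fun=> 0) x0).
    by rewrite mulr0.
  + split; first by move=> y hy; rewrite mulr_ge0 ?minge0 // => j; case/andP: (hy j).
    move=> y z _ _ hyz; apply: (ler_wpM2l hr).
    apply: le_bigmin => // j _; exact: le_trans (minle _ j) (hyz j).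
  + by [].
  + split; first by move=> y hy; case/andP: (hy k).
    by move=> y z _ _ hyz.
- move=> i k; case: (I2cases i) => -> x y t hx hy ht; rewrite /vv ?eqxx ?h10.
  + rewrite [t * _]mulrCA [(1-t) * _]mulrCA -mulrDr; apply: (ler_wpM2l hr).
    case/andP: ht => t0 t1.
    have t1' : 0 <= 1 - t by lra.
    apply: le_bigmin => [|j _].
      have := ler_wpM2l t0 (minle1 x); have := ler_wpM2l t1' (minle1 y).
      rewrite !mulr1; lra.
    exact: lerD (ler_wpM2l t0 (minle x j)) (ler_wpM2l t1' (minle y j)).
  + by [].
- split; first by [].
  split; first by move=> i k; rewrite big_ord1.
  move=> i k l j; rewrite /bb; case: ifP => _; first exact: ltW.
  case: ifP => _ //; exact: ltW.
- split.
- move=> t; split; first by move=> i j; case: ifP.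
  by move=> j; rewrite sum2 eqxx h10 addr0.
- by rewrite ESW; apply: divr_gt0; lra.
- rewrite ESW ESWA -/r. 
  have -> : r / 2 * (2 * r / (1 + r)) = r * (r / (1 + r)) by field; rewrite a0.
  rewrite ger_pMr // ler_pdivrMr; lra.
Qed.
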